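(* Let $\mathcal{C}$ be the smallest set of functions of finite arity on $[0,1]$ such that: (i) $\mathcal{C}$ contains all projections $p^n_i(x_0,\dots,x_{n-1})=x_i$; (ii) if $g\in\mathcal{C}$ is $n$-ary and $q\in\mathbb{Q}\cap[0,1]$, then $\mathbf{x}\mapsto\chi_q(g(\mathbf{x}))$ belongs to $\mathcal{C}$; (iii) if $g_1,g_2\in\mathcal{C}$ are $n$-ary and $q\in\mathbb{Q}\cap[0,1]$, then $\mathbf{x}\mapsto\mathsf{Med}_q(g_1(\mathbf{x}),g_2(\mathbf{x}))$ belongs to $\mathcal{C}$; (iv) if $I$ is a nonempty set with $|I|\le\mathfrak{c}$ and $g_i\in\mathcal{C}$, $i\in I$, are $n$-ary, then the pointwise supremum $\bigvee_{i\in I}g_i$ and the pointwise infimum $\bigwedge_{i\in I}g_i$ belong to $\mathcal{C}$. Then $\mathcal{C}=\mathsf{Agg}$; that is, $\mathsf{Agg}$ is generated by the countable set consisting of the infinitary operations $\bigvee$ and $\bigwedge$, the functions $\chi_q$ and the medians $\mathsf{Med}_q$, $q\in\mathbb{Q}\cap[0,1]$.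
   Context: An $n$-ary aggregation function on $[0,1]$ is a function $f\colon[0,1]^n\to[0,1]$ nondecreasing in each coordinate with $f(0,\dots,0)=0$ and $f(1,\dots,1)=1$; $\mathsf{Agg}$ is the set of all aggregation functions of all finite arities $n\in\mathbb{N}$ (unary ones not restricted to the identity). For $a\in[0,1]$, $\chi_a(x)=1$ if $x\ge a$ and $x\neq0$, and $\chi_a(x)=0$ otherwise. $\mathsf{Med}_b(x,y)$ is the median of $x,y,b$. $\mathfrak{c}=2^{\aleph_0}$. *)

(* Defs.v *)
From HB Require Import structures.
From mathcomp Require Import all_boot all_order all_algebra.
From mathcomp Require Import boolp classical_sets cardinality reals.
Set Implicit Arguments. Unset Strict Implicit. Unset Printing Implicit Defensive.
Import Order.TTheory GRing.Theory Num.Theory.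
Local Open Scope ring_scope.
Local Open Scope classical_set_scope.

(* An n-ary function on [0,1] is represented by F : ('I_n -> R) -> R, of which
   only the values on the cube [0,1]^n are relevant. *)
Definition in01 (R : realType) (x : R) : Prop := 0 <= x <= 1.
Definition in_cube (R : realType) n (x : 'I_n -> R) : Prop := forall i, in01 (x i).

Definition chi (R : realType) (a x : R) : R :=
  if (a <= x) && (x != 0) then 1 else 0.

(* Med_b(x,y) = median of x, y, b *)
Definition Med (R : realType) (b x y : R) : R :=
  Num.max (Num.min x y) (Num.min (Num.max x y) b).

Definition Agg (R : realType) n (f : ('I_n -> R) -> R) : Prop :=
  (forall x, in_cube x -> in01 (f x)) /\
  (forall x y, in_cube x -> in_cube y -> (forall i, x i <= y i) -> f x <= f y) /\
  f (fun _ => 0) = 0 /\ f (fun _ => 1) = 1.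

Definition rat01 (q : rat) : bool := (0 <= q) && (q <= 1).

(* The smallest class C of finite-arity functions on [0,1] closed under
   (i)-(iv); functions agreeing on [0,1]^n are identified (rule C_ext). *)
Inductive C (R : realType) : forall n, (('I_n -> R) -> R) -> Prop :=
| C_proj n (i : 'I_n) : C (fun x => x i)
| C_chi n (g : ('I_n -> R) -> R) (q : rat) :
    rat01 q -> C g -> C (fun x => chi (ratr q) (g x))
| C_med n (g1 g2 : ('I_n -> R) -> R) (q : rat) :
    rat01 q -> C g1 -> C g2 -> C (fun x => Med (ratr q) (g1 x) (g2 x))
| C_sup n (I : Type) (g : I -> ('I_n -> R) -> R) :
    inhabited I -> ([set: I] #<= [set: R])%card -> (forall i, C (g i)) ->
    C (fun x => sup (range (fun i => g i x)))
| C_inf n (I : Type) (g : I -> ('I_n -> R) -> R) :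
    inhabited I -> ([set: I] #<= [set: R])%card -> (forall i, C (g i)) ->
    C (fun x => inf (range (fun i => g i x)))
| C_ext n (g h : ('I_n -> R) -> R) :
    C g -> (forall x, in_cube x -> h x = g x) -> C h.

(* Main.v *)
Require Import Defs.
From mathcomp Require Import all_boot all_order all_algebra.
From mathcomp Require Import boolp classical_sets cardinality reals.
Set Implicit Arguments. Unset Strict Implicit. Unset Printing Implicit Defensive.
Import Order.TTheory GRing.Theory Num.Theory.
Local Open Scope ring_scope.
Local Open Scope classical_set_scope.

Lemma ler_rat1 (F : numFieldType) (q : rat) : (ratr q <= 1 :> F) = (q <= 1).
Proof. by rewrite -(rmorph1 (ratr : rat -> F)) ler_rat. Qed.
Lemma ratr_inj (F : numFieldType) : injective (ratr : rat -> F).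
Proof. exact: fmorph_inj. Qed.

Section Aux.
Variable R : realType.

Lemma supr_ub (I : Type) (g : I -> R) b j : (forall i, g i <= b) -> g j <= sup (range g).
Proof.
move=> hb; apply: ub_le_sup; last by exists j.
by exists b => _ [i _ <-].
Qed.

Lemma supr_le (I : Type) (g : I -> R) b : inhabited I -> (forall i, g i <= b) -> sup (range g) <= b.
Proof.
case=> i0 hb; apply: ge_sup; first by exists (g i0), i0.
by move=> _ [i _ <-].
Qed.

Lemma infr_lb (I : Type) (g : I -> R) b j : (forall i, b <= g i) -> inf (range g) <= g j.
Proof.
move=> hb; apply: ge_inf; last by exists j.
by exists b => _ [i _ <-].
Qed.

Lemma infr_ge (I : Type) (g : I -> R) b : inhabited I -> (forall i, b <= g i) -> b <= inf (range g).
Proof.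
case=> i0 hb; apply: lb_le_inf; first by exists (g i0), i0.
by move=> _ [i _ <-].
Qed.

Lemma chi_mono (a x y : R) : 0 <= x -> x <= y -> chi a x <= chi a y.
Proof.
rewrite /chi => x0 xy.
case: ifP => [/andP[ax xn0]|_]; last by case: ifP.
have y0 : 0 < y by apply: lt_le_trans xy; rewrite lt_neqAle eq_sym xn0.
by rewrite (le_trans ax xy) gt_eqF.
Qed.

Lemma chi01 (a x : R) : in01 (chi a x).
Proof. by rewrite /in01 /chi; case: ifP => _; rewrite ?lexx ?ler01. Qed.

Lemma Med_mono (b x y x' y' : R) : x <= x' -> y <= y' -> Med b x y <= Med b x' y'.
Proof.
move=> h1 h2; rewrite /Med; apply: le_max2.
  exact: le_min2.
by apply: le_min2 => //; apply: le_max2.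
Qed.

Lemma Med01 (b x y : R) : in01 b -> in01 x -> in01 y -> in01 (Med b x y).
Proof.
rewrite /in01 /Med => /andP[b0 b1] /andP[x0 x1] /andP[y0 y1].
rewrite le_max le_min x0 y0 /= ge_max !ge_min x1 /=.
by rewrite b1 orbT. Qed.

Lemma C_Agg n (f : ('I_n -> R) -> R) : C f -> Agg f.
Proof.
elim=> {n f}.
- move=> n i; split; first by move=> x /(_ i).
  split; first by move=> x y _ _ /(_ i).
  by [].
- move=> n g q /andP[q0 q1] _ [g01 [gm [g0 g1]]]; split; first by move=> *; exact: chi01.
  split.
    move=> x y cx cy xy; apply: chi_mono; last exact: gm.
    by case/andP: (g01 _ cx).
  rewrite g0 g1 /chi eqxx andbF; split => //.
  by rewrite oner_eq0 andbT ler_rat1 q1.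
- move=> n g1 g2 q /andP[q0 q1] _ [a01 [am [a0 a1]]] _ [b01 [bm [b0 b1]]].
  have q01 : in01 (ratr q : R) by rewrite /in01 ler0q ler_rat1 q0 q1.
  split; first by move=> x cx; apply: Med01 => //; [exact: a01|exact: b01].
  split; first by move=> x y cx cy xy; apply: Med_mono; [exact: am|exact: bm].
  rewrite a0 b0 a1 b1 /Med !minxx !maxxx; split.
    by case/andP: q01 => h0 h1; rewrite (min_l h0) maxxx.
  by case/andP: q01 => h0 h1; rewrite (min_r h1) max_l.
- move=> n I g [i0] _ _ IH.
  have hb x : in_cube x -> forall i, 0 <= g i x <= 1 by move=> cx i; case: (IH i) => h _; exact: h.
  split.
    move=> x cx; apply/andP; split.
      apply: le_trans _ (@supr_ub _ (fun i => g i x) 1 i0 (fun i => proj2 (andP (hb x cx i)))).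
      by case/andP: (hb x cx i0).
    by apply: supr_le; [exact: (inhabits i0)| move=> i; case/andP: (hb x cx i)].
  split.
    move=> x y cx cy xy; apply: supr_le; first exact: inhabits i0.
    move=> i; apply: le_trans _ (@supr_ub _ (fun i => g i y) 1 i (fun i => proj2 (andP (hb y cy i)))).
    by case: (IH i) => _ [h _]; exact: h.
  have e0 : range (fun i => g i (fun=> 0)) = [set 0].
    by apply/seteqP; split => [_ [i _ <-]|_ ->]; [case: (IH i) => _ [_ []]|exists i0 => //; case: (IH i0) => _ [_ []]].
  have e1 : range (fun i => g i (fun=> 1)) = [set 1].
    by apply/seteqP; split => [_ [i _ <-]|_ ->]; [case: (IH i) => _ [_ [_ ]]|exists i0 => //; case: (IH i0) => _ [_ [_ ]]].
  by rewrite e0 e1 !sup1.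
- move=> n I g [i0] _ _ IH.
  have hb x : in_cube x -> forall i, 0 <= g i x <= 1 by move=> cx i; case: (IH i) => h _; exact: h.
  split.
    move=> x cx; apply/andP; split.
      by apply: infr_ge; [exact: (inhabits i0)| move=> i; case/andP: (hb x cx i)].
    apply: le_trans (@infr_lb _ (fun i => g i x) 0 i0 (fun i => proj1 (andP (hb x cx i)))) _.
    by case/andP: (hb x cx i0).
  split.
    move=> x y cx cy xy; apply: infr_ge; first exact: inhabits i0.
    move=> i; apply: le_trans (@infr_lb _ (fun i => g i x) 0 i (fun i => proj1 (andP (hb x cx i)))) _.
    by case: (IH i) => _ [h _]; exact: h.
  have e0 : range (fun i => g i (fun=> 0)) = [set 0].
    by apply/seteqP; split => [_ [i _ <-]|_ ->]; [case: (IH i) => _ [_ []]|exists i0 => //; case: (IH i0) => _ [_ []]].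
  have e1 : range (fun i => g i (fun=> 1)) = [set 1].
    by apply/seteqP; split => [_ [i _ <-]|_ ->]; [case: (IH i) => _ [_ [_ ]]|exists i0 => //; case: (IH i0) => _ [_ [_ ]]].
  by rewrite e0 e1 !inf1.
- move=> n g h _ [g01 [gm [g0 g1]]] e.
  have c0 : in_cube (fun _ : 'I_n => 0 : R) by move=> i; rewrite /in01 lexx ler01.
  have c1 : in_cube (fun _ : 'I_n => 1 : R) by move=> i; rewrite /in01 lexx ler01.
  split; first by move=> x cx; rewrite e //; exact: g01.
  split; first by move=> x y cx cy xy; rewrite !e //; exact: gm.
  by rewrite !e.
Qed.

Section Gen.
Variable N : nat.

Definition supC (I : Type) := forall g : I -> ('I_N -> R) -> R,
  (forall i, C (g i)) -> C (fun x => sup (range (fun i => g i x))).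
Definition infC (I : Type) := forall g : I -> ('I_N -> R) -> R,
  (forall i, C (g i)) -> C (fun x => inf (range (fun i => g i x))).

Lemma supC_R : supC R.
Proof. by move=> g hg; apply: C_sup; [exact: inhabits 0|exact: card_lexx|exact: hg]. Qed.
Lemma infC_R : infC R.
Proof. by move=> g hg; apply: C_inf; [exact: inhabits 0|exact: card_lexx|exact: hg]. Qed.

Lemma range_surj (I J : Type) (s : I -> J) (g : J -> R) :
  (forall j, exists i, s i = j) -> range (fun i => g (s i)) = range g.
Proof.
move=> hs; apply/seteqP; split => [_ [i _ <-]|_ [j _ <-]]; first by exists (s i).
by case: (hs j) => i <-; exists i.
Qed.

Lemma supC_surj (I J : Type) (s : I -> J) :
  (forall j, exists i, s i = j) -> supC I -> supC J.
Proof.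
move=> hs hI g hg; have := hI (fun i => g (s i)) (fun i => hg (s i)).
suff -> : (fun x => sup (range (fun i => g (s i) x))) = (fun x => sup (range (fun j => g j x))) by [].
by apply: funext => x; rewrite (range_surj (fun j => g j x) hs).
Qed.

Lemma infC_surj (I J : Type) (s : I -> J) :
  (forall j, exists i, s i = j) -> infC I -> infC J.
Proof.
move=> hs hI g hg; have := hI (fun i => g (s i)) (fun i => hg (s i)).
suff -> : (fun x => inf (range (fun i => g (s i) x))) = (fun x => inf (range (fun j => g j x))) by [].
by apply: funext => x; rewrite (range_surj (fun j => g j x) hs).
Qed.

Lemma supC_prod (I J : Type) : inhabited I -> inhabited J -> supC I -> supC J -> supC (I * J).
Proof.
move=> [i0] [j0] hI hJ g hg.
have hin a : C (fun x => sup (range (fun b => g (a, b) x))) by apply: hJ => b; exact: hg.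
apply: C_ext (hI _ hin) _ => x cx.
have hb p : 0 <= g p x <= 1 by case: (C_Agg (hg p)) => h _; exact: h.
have hb1 p : g p x <= 1 by case/andP: (hb p).
have inner a : sup (range (fun b => g (a, b) x)) <= 1.
  by apply: supr_le; [exact: inhabits j0|move=> b; exact: hb1].
apply/le_anti/andP; split.
  apply: supr_le; first exact: inhabits (i0, j0).
  case=> a b; apply: le_trans (@supr_ub _ (fun b => g (a, b) x) 1 b (fun b => hb1 _)) _.
  exact: (@supr_ub _ (fun a => sup (range (fun b => g (a, b) x))) 1 a inner).
apply: supr_le; first exact: inhabits i0.
move=> a; apply: supr_le; first exact: inhabits j0.
move=> b; exact: (@supr_ub _ (fun p => g p x) 1 (a, b) hb1).
Qed.

Lemma supC_cube n : supC ('I_n -> R).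
Proof.
elim: n => [|m IH].
  apply: (@supC_surj R _ (fun r _ => r)) supC_R => b; exists 0; apply: funext => -[] ? i; by [].
apply: (@supC_surj (R * ('I_m -> R)) _
  (fun p i => match unlift ord0 i with Some j => p.2 j | None => p.1 end)).
  move=> b; exists (b ord0, fun j => b (lift ord0 j)); apply: funext => i /=.
  by case: unliftP => [j ->|->].
by apply: supC_prod => //; [exact: inhabits 0|exact: inhabits (fun=> 0)|exact: supC_R].
Qed.

Lemma surj_of_inj (T : Type) (t0 : T) (h : T -> R) : injective h ->
  exists s : R -> T, forall t, exists r, s r = t.
Proof.
move=> hi.
exists (fun r => match pselect (exists t, h t = r) with left e => projT1 (cid e) | right _ => t0 end).
move=> t; exists (h t); case: pselect => [e|[]]; last by exists t.
by case: (cid e) => t' /= /hi.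
Qed.

Lemma supC_rat : supC rat.
Proof.
have [s hs] := surj_of_inj 0%R (@ratr_inj R).
exact: supC_surj hs supC_R.
Qed.
Lemma infC_rat : infC rat.
Proof.
have [s hs] := surj_of_inj 0%R (@ratr_inj R).
exact: infC_surj hs infC_R.
Qed.
Lemma infC_ord n : infC 'I_n.+1.
Proof.
have hi : injective (fun i : 'I_n.+1 => (val i)%:R : R).
  by move=> i j /eqP; rewrite eqr_nat => /eqP /val_inj.
have [s hs] := surj_of_inj ord0 hi.
exact: infC_surj hs infC_R.
Qed.

End Gen.

Section Main.
Variable N : nat.

Definition phi (c : R) (q : rat) : rat :=
  if (0 <= q) && (q <= 1) && (ratr q < c) then q else 0.
Definition L (c : R) (i : 'I_N) (x : 'I_N -> R) : R :=
  inf (range (fun q : rat => chi (ratr (phi c q)) (x i))).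

Lemma phi01 c q : rat01 (phi c q).
Proof. by rewrite /phi /rat01; case: ifP => [/andP[/andP[-> ->]] //|]; rewrite lexx ler01. Qed.

Lemma C_L c i : C (L c i).
Proof.
apply: (@infC_rat N (fun q x => chi (ratr (phi c q)) (x i))) => q.
by apply: C_chi; [exact: phi01|exact: C_proj].
Qed.

Lemma L_val c i x : in_cube x -> 0 < c -> c <= 1 -> L c i x = if c <= x i then 1 else 0.
Proof.
move=> cx c0 c1.
have t0 q : 0 <= chi (ratr (phi c q)) (x i) by case/andP: (chi01 (ratr (phi c q)) (x i)).
have [x0 x1] : 0 <= x i /\ x i <= 1 by case/andP: (cx i).
case: ifP => hc.
  apply/le_anti/andP; split.
    apply: le_trans (@infr_lb _ (fun q => chi (ratr (phi c q)) (x i)) 0 0%R t0) _.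
    by case/andP: (chi01 (ratr (phi c 0)) (x i)).
  apply: infr_ge; first exact: inhabits 0%R.
  move=> q; have xp : 0 < x i by apply: lt_le_trans hc.
  rewrite /chi gt_eqF // andbT.
  suff -> : ratr (phi c q) <= x i by [].
  rewrite /phi; case: ifP => [/andP[_ /ltW lt]|_]; first exact: le_trans lt hc.
  by rewrite rmorph0.
have [q hq] : exists q, chi (ratr (phi c q)) (x i) = 0.
  have [xz|xnz] := eqVneq (x i) 0.
    exists 0%R; rewrite /phi; case: ifP => _; by rewrite rmorph0 /chi xz eqxx andbF.
  have xlt : x i < c by rewrite ltNge hc.
  have [q] := rat_in_itvoo xlt; rewrite in_itv /= => /andP[h1 h2].
  exists q; rewrite /phi.
  have -> : (0 <= q) && (q <= 1) && (ratr q < c).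
    rewrite h2 andbT -(ler0q R) -(ler_rat1 R) (le_trans x0 (ltW h1)) /=.
    exact: le_trans (ltW h2) c1.
  by rewrite /chi leNgt h1.
apply/le_anti/andP; split.
  by rewrite -hq; apply: (@infr_lb _ (fun q => chi (ratr (phi c q)) (x i)) 0 q t0).
by apply: infr_ge; [exact: inhabits 0%R|exact: t0].
Qed.

End Main.

Lemma Med00 (q : R) : 0 <= q -> Med q 0 0 = 0.
Proof. by move=> q0; rewrite /Med minxx maxxx (min_l q0) maxxx. Qed.
Lemma Med10 (q : R) : 0 <= q -> q <= 1 -> Med q 1 0 = q.
Proof. by move=> q0 q1; rewrite /Med (min_r ler01) (max_l ler01) (min_r q1) (max_r q0). Qed.
Lemma Med11 (q : R) : q <= 1 -> Med q 1 1 = 1.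
Proof. by move=> q1; rewrite /Med minxx maxxx (min_r q1) (max_l q1). Qed.

Section Main2.
Variable m : nat.
Local Notation N := m.+1.

Definition j0 (a : 'I_N -> R) : 'I_N :=
  match pselect (exists j, 0 < a j) with left e => projT1 (cid e) | right _ => ord0 end.
Definition jj (a : 'I_N -> R) (i : 'I_N) : 'I_N := if 0 < a i then i else j0 a.
Definition h (a : 'I_N -> R) (x : 'I_N -> R) : R :=
  inf (range (fun i => L (a (jj a i)) (jj a i) x)).
Definition k (x : 'I_N -> R) : R := h (fun _ => 1) x.

Lemma C_h a : C (h a).
Proof.
exact: (@infC_ord N m (fun i x => L (a (jj a i)) (jj a i) x) (fun i => C_L _ _)).
Qed.

Lemma jj_pos a i : (exists j, 0 < a j) -> 0 < a (jj a i).
Proof.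
move=> ex; rewrite /jj; case: ifP => // _.
by rewrite /j0; case: pselect => // e; case: (cid e).
Qed.

Lemma h_term a x i : in_cube a -> (exists j, 0 < a j) -> in_cube x ->
  L (a (jj a i)) (jj a i) x = if a (jj a i) <= x (jj a i) then 1 else 0.
Proof.
move=> ca ex cx; apply: L_val => //; first exact: jj_pos.
by case/andP: (ca (jj a i)).
Qed.

Lemma h_one a x : in_cube a -> (exists j, 0 < a j) -> in_cube x ->
  (forall i, a i <= x i) -> h a x = 1.
Proof.
move=> ca ex cx le.
have t i : L (a (jj a i)) (jj a i) x = 1 by rewrite h_term // le.
apply/le_anti/andP; split.
  rewrite -(t ord0); apply: (@infr_lb _ (fun i => L (a (jj a i)) (jj a i) x) 0 ord0).
  by move=> i; rewrite t ler01.
by apply: infr_ge; [exact: inhabits ord0|move=> i; rewrite t].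
Qed.

Lemma h_zero a x : in_cube a -> (exists j, 0 < a j) -> in_cube x ->
  ~ (forall i, a i <= x i) -> h a x = 0.
Proof.
move=> ca ex cx nle.
have t0 i : 0 <= L (a (jj a i)) (jj a i) x by rewrite h_term //; case: ifP; rewrite ?ler01.
have [i hi] : exists i, x i < a i.
  apply: contrapT => hn; apply: nle => i; rewrite leNgt; apply/negP => hh; apply: hn; by exists i.
have ai : 0 < a i by apply: le_lt_trans hi; case/andP: (cx i).
have ji : jj a i = i by rewrite /jj ai.
have ti : L (a (jj a i)) (jj a i) x = 0 by rewrite h_term // ji leNgt hi.
apply/le_anti/andP; split.
  by rewrite -ti; apply: (@infr_lb _ (fun i => L (a (jj a i)) (jj a i) x) 0 i t0).
by apply: infr_ge; [exact: inhabits ord0|exact: t0].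
Qed.

Lemma cube1 : in_cube (fun _ : 'I_N => 1 : R).
Proof. by move=> i; rewrite /in01 ler01 lexx. Qed.
Lemma ex1 : exists j : 'I_N, (0 : R) < (fun _ => 1) j.
Proof. by exists ord0; rewrite ltr01. Qed.

Variable f : ('I_N -> R) -> R.
Hypothesis hf : Agg f.

Lemma k_le x : in_cube x -> 0 <= k x /\ k x <= f x /\ (k x = 1 \/ k x = 0) /\ (k x = 1 -> f x = 1).
Proof.
move=> cx; case: hf => f01 [fm [f0 f1]].
have [le|nle] := pselect (forall i, (fun _ => 1 : R) i <= x i).
  have e : f x = 1.
    apply/le_anti/andP; split; first by case/andP: (f01 _ cx).
    by rewrite -{1}f1; apply: fm => //; exact: cube1.
  by rewrite /k h_one //; [rewrite e ler01 lexx; split; [|split; [|split; [left|]]]|exact: cube1|exact: ex1].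
rewrite /k h_zero //; [|exact: cube1|exact: ex1].
split; first by rewrite lexx.
split; first by case/andP: (f01 _ cx).
split; first by right.
by move=> /eqP; rewrite eq_sym oner_eq0.
Qed.

Definition cond (a : 'I_N -> R) (q : rat) : Prop :=
  [/\ in_cube a, exists j, 0 < a j, rat01 q & ratr q <= f a].
Definition T (a : 'I_N -> R) (q : rat) : ('I_N -> R) -> R :=
  if pselect (cond a q) then fun x => Med (ratr q) (h a x) (k x) else k.

Lemma C_T a q : C (T a q).
Proof.
rewrite /T; destruct (pselect (cond a q)) as [c|c].
  have [_ _ hq _] := c; rewrite /=; by apply: C_med => //; [exact: C_h|exact: C_h].
exact: C_h.
Qed.

Lemma T_bounds a q x : in_cube x -> 0 <= T a q x /\ T a q x <= f x.
Proof.
move=> cx; have [k0 [kf [k01 k1]]] := k_le cx.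
case: (hf) => f01 [fm [f0 f1]].
rewrite /T; destruct (pselect (cond a q)) as [c|c]; last by [].
have [ca ex /andP[q0 q1] qf] := c; rewrite /=.
have q0' : (0 : R) <= ratr q by rewrite ler0q.
have q1' : (ratr q : R) <= 1 by rewrite ler_rat1.
case: k01 => ke.
  have hm : in01 (Med (ratr q) (h a x) (k x)).
    apply: Med01; first by rewrite /in01 q0' q1'.
      have [le|nle] := pselect (forall i, a i <= x i).
        by rewrite h_one // /in01 ler01 lexx.
      by rewrite h_zero // /in01 ler01 lexx.
    by rewrite ke /in01 ler01 lexx.
  case/andP: hm => -> hm1; split => //; by rewrite k1.
rewrite ke; have [le|nle] := pselect (forall i, a i <= x i).
  rewrite h_one // Med10 //; split => //.
  by apply: le_trans qf _; apply: fm.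
by rewrite h_zero // Med00 // lexx; case/andP: (f01 _ cx).
Qed.

Lemma T_diag x q : in_cube x -> (exists j, 0 < x j) -> (0 <= q)%R -> (ratr q <= f x) ->
  ratr q <= T x q x.
Proof.
move=> cx ex q0 qf; have [k0 [kf [k01 k1]]] := k_le cx.
case: (hf) => f01 [fm [f0 f1]].
have q1' : (ratr q : R) <= 1 by apply: le_trans qf _; case/andP: (f01 _ cx).
have q1 : q <= 1 by rewrite -(ler_rat1 R).
rewrite /T; destruct (pselect (cond x q)) as [c0|c]; last by exfalso; apply: c; split => //; rewrite /rat01 q0 q1.
rewrite /=.
rewrite h_one //; case: k01 => ->; first by rewrite Med11.
by rewrite Med10 // ler0q.
Qed.

Lemma Agg_C : C f.
Proof.
have hC := @supC_prod N _ _ (inhabits (fun _ => 0)) (inhabits 0%R)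
   (@supC_cube N N) (@supC_rat N) (fun p => T p.1 p.2) (fun p => C_T p.1 p.2).
apply: C_ext hC _ => x cx /=.
case: (hf) => f01 [fm [f0 f1]].
have hb p : T p.1 p.2 x <= 1.
  by case: (T_bounds p.1 p.2 cx) => _ h1; apply: le_trans h1 _; case/andP: (f01 _ cx).
have s0 : 0 <= sup (range (fun p : ('I_N -> R) * rat => T p.1 p.2 x)).
  apply: le_trans (@supr_ub _ (fun p : ('I_N -> R) * rat => T p.1 p.2 x) 1 (fun _ => 0, 0%R) hb).
  by case: (T_bounds (fun _ => 0) 0%R cx).
apply/le_anti/andP; split; last first.
  by apply: supr_le; [exact: inhabits (fun _ => 0, 0%R)|move=> p; case: (T_bounds p.1 p.2 cx)].
have [ex|nex] := pselect (exists j, 0 < x j); last first.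
  apply: le_trans s0; rewrite -f0; apply: fm => //.
    by move=> i; rewrite /in01 lexx ler01.
  move=> i; rewrite leNgt; apply/negP => hi; apply: nex; by exists i.
rewrite leNgt; apply/negP => hlt.
have [q] := rat_in_itvoo hlt; rewrite in_itv /= => /andP[h1 h2].
have q0 : (0 <= q)%R by rewrite -(ler0q R); apply: le_trans s0 (ltW h1).
have := T_diag cx ex q0 (ltW h2).
move=> hd; have := le_trans hd (@supr_ub _ (fun p : ('I_N -> R) * rat => T p.1 p.2 x) 1 (x, q) hb).
by rewrite leNgt h1.
Qed.

End Main2.
End Aux.

Theorem corollary1 (R : realType) (n : nat) (f : ('I_n -> R) -> R) :
  C f <-> Agg f.
Proof.
split; first exact: C_Agg.
case: n f => [|m] f hf; last exact: Agg_C.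
case: hf => _ [_ [f0 f1]].
have e : (fun _ : 'I_0 => 0 : R) = (fun _ => 1) by apply: funext => -[].
by move: f1; rewrite -e f0 => /eqP; rewrite eq_sym oner_eq0.
Qed.
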